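(* Let $(p_k)$, $q$, $\mathbf Q$ and $(\phi_{n+1},\psi_{n+1})_{n\ge0}$ be as in the context. There exists a constant $C_\psi$ depending only on $(p_k)_{k\ge0}$ such that for all $n\ge0$ and $k\ge0$, $\mathbf Q[\psi_{n+1}=k]\le C_\psi\,k\,q^k$. In particular $\sup_{i\ge1}E_{\mathbf Q}[\psi_i]<\infty$.
   Context: $(p_k)_{k\ge0}$ is a probability distribution on $\{0,1,\dots\}$ with generating function $\mathbf f$, $p_0>0$ and $\mathbf f'(1)\in(1,\infty)$; $q\in(0,1)$ is its extinction probability ($\mathbf f(q)=q$). $\mathbf Q$ is the law of a Galton–Watson tree with offspring distribution $q_k=p_kq^{k-1}$, $k\ge0$ (a subcritical law with mean $\mathbf f'(q)<1$); under $\mathbf Q$, $Z_n$ is the number of vertices in generation $n$ and $H=\max\{n:Z_n>0\}$. On an enlarged probability space (still denoted $\mathbf Q$), $(\phi_{n+1},\psi_{n+1})_{n\ge0}$ are independent pairs of random variables with $\mathbf Q[\phi_{n+1}=j,\psi_{n+1}=k]=c_nq_k\mathbf Q[Z_n=0]^{j-1}\mathbf Q[Z_{n+1}=0]^{k-j}$ for $1\le j\le k$, $k\ge1$, where $c_n=\mathbf Q[H=n]/\mathbf Q[H=n+1]$. *)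

(* Defs.v *)
From Stdlib Require Import Reals Lra.
From Coquelicot Require Import Coquelicot.
Open Scope R_scope.

Definition gen_fun (p : nat -> R) (s : R) : R := Series (fun k => p k * s ^ k).

Definition qlaw (p : nat -> R) (q : R) (k : nat) : R := p k * q ^ k / q.

(* Q[Z_n = 0] for the Galton-Watson tree with offspring law qlaw p q,
   started from one ancestor (Z_0 = 1): Q[Z_0 = 0] = 0 and, by the
   first-generation decomposition, Q[Z_(n+1) = 0] = sum_k q_k Q[Z_n = 0]^k. *)
Fixpoint QZ0 (p : nat -> R) (q : R) (n : nat) : R :=
  match n with
  | O => 0
  | S m => gen_fun (qlaw p q) (QZ0 p q m)
  end.

(* Q[H = n] = Q[Z_n > 0, Z_(n+1) = 0] = Q[Z_(n+1) = 0] - Q[Z_n = 0]. *)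
Definition QH (p : nat -> R) (q : R) (n : nat) : R :=
  QZ0 p q (S n) - QZ0 p q n.

Definition cst (p : nat -> R) (q : R) (n : nat) : R := QH p q n / QH p q (S n).

(* Joint law: Q[phi_(n+1) = j, psi_(n+1) = k]
   = c_n q_k Q[Z_n=0]^(j-1) Q[Z_(n+1)=0]^(k-j),  1 <= j <= k, k >= 1. *)
Definition phipsi_law (p : nat -> R) (q : R) (n j k : nat) : R :=
  if andb (Nat.leb 1 j) (Nat.leb j k) then
    cst p q n * qlaw p q k * QZ0 p q n ^ (j - 1) * QZ0 p q (S n) ^ (k - j)
  else 0.

(* Marginal law of psi_(n+1): Q[psi_(n+1) = k] = sum_(j = 1..k) of the above
   (sum_f_R0 g k = g 0 + ... + g k; the j = 0 term vanishes). *)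
Definition psi_law (p : nat -> R) (q : R) (n k : nat) : R :=
  sum_f_R0 (fun j => phipsi_law p q n j k) k.

(* Main.v *)
Require Import Defs.
From Stdlib Require Import Reals Lra Lia Classical.
From Coquelicot Require Import Coquelicot.
Open Scope R_scope.

Lemma series_nonneg (a : nat -> R) : (forall n, 0 <= a n) -> ex_series a -> 0 <= Series a.
Proof.
  intros Ha Hex.
  assert (H := Series_le (fun _ => 0) a (fun n => conj (Rle_refl 0) (Ha n)) Hex).
  rewrite (Series_ext (fun _ => 0) (fun n => 0 * 0)) in H by (intros; ring).
  rewrite Series_scal_l in H. lra.
Qed.

Lemma term_le_series (a : nat -> R) (m : nat) :
  (forall n, 0 <= a n) -> ex_series a -> a m <= Series a.
Proof.
  intros Ha Hex.
  rewrite (Series_incr_n a (S m)) by (lia || exact Hex).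
  simpl pred.
  assert (0 <= Series (fun k => a (S m + k)%nat)).
  { apply series_nonneg. intros; apply Ha. apply (ex_series_incr_n a (S m)); exact Hex. }
  assert (a m <= sum_f_R0 a m).
  { destruct m. simpl; lra. simpl. assert (0 <= sum_f_R0 a m) by (apply cond_pos_sum; exact Ha). lra. }
  lra.
Qed.

Lemma ex_k2 (q : R) : 0 < q < 1 -> ex_series (fun k => INR k * INR k * q ^ k).
Proof.
  intros Hq.
  apply ex_series_incr_1.
  apply ex_series_Rabs.
  apply (ex_series_DAlembert _ q). lra.
  { intros n. apply Rgt_not_eq. apply Rmult_lt_0_compat.
    apply Rmult_lt_0_compat; apply lt_0_INR; lia. apply pow_lt; lra. }
  assert (Hl : is_lim_seq (fun n => (1 + / INR (S n)) * (1 + / INR (S n)) * q) ((1 + 0) * (1 + 0) * q)).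
  { assert (Hi : is_lim_seq (fun n => / INR (S n)) 0).
    { assert (H0 : is_lim_seq (fun n => / INR n) (Rbar_inv p_infty)).
      { apply is_lim_seq_inv. apply is_lim_seq_INR. discriminate. }
      apply (is_lim_seq_incr_1 (fun n => / INR n)). exact H0. }
    apply is_lim_seq_mult'. apply is_lim_seq_mult';
    apply is_lim_seq_plus'; try apply is_lim_seq_const; exact Hi.
    apply is_lim_seq_const. }
  assert (E : (1 + 0) * (1 + 0) * q = q) by ring. rewrite E in Hl.
  apply (is_lim_seq_ext (fun n => (1 + / INR (S n)) * (1 + / INR (S n)) * q)); [|exact Hl].
  intros n.
  assert (HS : 0 < INR (S n)) by (apply lt_0_INR; lia).
  rewrite Rabs_pos_eq.
  - rewrite (S_INR (S n)). simpl pow. field. assert (INR (S n) <> 0) by lra. split; [apply pow_nonzero; lra | split; [lra|assumption]].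
  - apply Rmult_le_pos. apply Rmult_le_pos. apply Rmult_le_pos; apply pos_INR. apply pow_le; lra.
    apply Rlt_le, Rinv_0_lt_compat. apply Rmult_lt_0_compat.
    apply Rmult_lt_0_compat; apply lt_0_INR; lia. apply pow_lt; lra.
Qed.

Section S.
Variables (p : nat -> R) (q : R).
Hypothesis Hp_nonneg : forall k, 0 <= p k.
Hypothesis Hp_sum : is_series p 1.
Hypothesis Hq : 0 < q < 1.
Hypothesis Hfix : gen_fun p q = q.

Lemma qlaw_nonneg k : 0 <= qlaw p q k.
Proof. unfold qlaw. apply Rmult_le_pos. apply Rmult_le_pos. apply Hp_nonneg. apply pow_le; lra.
  apply Rlt_le, Rinv_0_lt_compat; lra. Qed.

Lemma qlaw_le k : qlaw p q k <= p k * / q.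
Proof. unfold qlaw, Rdiv. apply Rmult_le_compat_r. apply Rlt_le, Rinv_0_lt_compat; lra.
  rewrite <- (Rmult_1_r (p k)) at 2. apply Rmult_le_compat_l. apply Hp_nonneg.
  rewrite <- (pow1 k). apply pow_incr. lra. Qed.

Lemma ex_g s : 0 <= s <= 1 -> ex_series (fun k => qlaw p q k * s ^ k).
Proof.
  intros Hs. apply (@ex_series_le R_AbsRing R_CompleteNormedModule _ (fun k => p k * / q)).
  - intros n. change (norm (qlaw p q n * s ^ n)) with (Rabs (qlaw p q n * s ^ n)).
    rewrite Rabs_pos_eq. 2: { apply Rmult_le_pos. apply qlaw_nonneg. apply pow_le; lra. }
    apply Rle_trans with (qlaw p q n). rewrite <- (Rmult_1_r (qlaw p q n)) at 2.
    apply Rmult_le_compat_l. apply qlaw_nonneg. rewrite <- (pow1 n). apply pow_incr; lra.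
    apply qlaw_le.
  - apply ex_series_scal_r. exists 1. exact Hp_sum.
Qed.

Lemma g_one : gen_fun (qlaw p q) 1 = 1.
Proof.
  unfold gen_fun, qlaw.
  rewrite (Series_ext _ (fun k => (p k * q ^ k) * / q)).
  2: { intros; rewrite pow1; unfold Rdiv; ring. }
  rewrite Series_scal_r. unfold gen_fun in Hfix. rewrite Hfix. field. lra.
Qed.

Lemma g_diff x y m : 0 <= x <= y -> y <= 1 ->
  qlaw p q m * (y ^ m - x ^ m) <= gen_fun (qlaw p q) y - gen_fun (qlaw p q) x.
Proof.
  intros Hxy Hy. unfold gen_fun.
  rewrite <- Series_minus by (apply ex_g; lra).
  rewrite Rmult_minus_distr_l.
  apply (term_le_series (fun n => qlaw p q n * y ^ n - qlaw p q n * x ^ n) m).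
  - intros n. assert (x ^ n <= y ^ n) by (apply pow_incr; lra).
    assert (0 <= qlaw p q n) by apply qlaw_nonneg. nra.
  - apply (@ex_series_minus R_AbsRing R_NormedModule (fun n => qlaw p q n * y ^ n) (fun n => qlaw p q n * x ^ n)); apply ex_g; lra.
Qed.

Lemma a_props n : 0 <= QZ0 p q n <= QZ0 p q (S n) /\ QZ0 p q (S n) <= 1.
Proof.
  induction n as [|n IH].
  - simpl QZ0. assert (H1 := g_diff 0 1 0 ltac:(lra) ltac:(lra)). rewrite g_one in H1.
    assert (0 <= gen_fun (qlaw p q) 0).
    { apply series_nonneg. intros k. apply Rmult_le_pos. apply qlaw_nonneg. apply pow_le; lra.
      apply ex_g; lra. }
    simpl pow in H1. lra.
  - destruct IH as [[H0 H1] H2]. 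
    change (QZ0 p q (S (S n))) with (gen_fun (qlaw p q) (QZ0 p q (S n))).
    change (QZ0 p q (S n)) with (gen_fun (qlaw p q) (QZ0 p q n)) at 2.
    assert (A := g_diff (QZ0 p q n) (QZ0 p q (S n)) 0 ltac:(lra) ltac:(lra)).
    assert (B := g_diff (QZ0 p q (S n)) 1 0 ltac:(lra) ltac:(lra)). rewrite g_one in B.
    simpl pow in A, B. change (QZ0 p q (S n)) with (gen_fun (qlaw p q) (QZ0 p q n)) in H2.
    lra.
Qed.

Lemma a_ge1 n : QZ0 p q 1 <= QZ0 p q (S n).
Proof.
  induction n. lra. destruct (a_props (S n)). lra.
Qed.

Lemma a1_pos : 0 < p 0%nat -> 0 < QZ0 p q 1.
Proof.
  intros H. simpl QZ0. unfold gen_fun.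
  apply Rlt_le_trans with (qlaw p q 0 * 0 ^ 0).
  - unfold qlaw. simpl. apply Rmult_lt_0_compat. 2: lra.
    apply Rmult_lt_0_compat. 2: apply Rinv_0_lt_compat; lra. lra.
  - apply (term_le_series (fun k => qlaw p q k * 0 ^ k) 0).
    intros k; apply Rmult_le_pos. apply qlaw_nonneg. apply pow_le; lra. apply ex_g; lra.
Qed.

Lemma QH_step m n : 0 < p 0%nat ->
  qlaw p q (S m) * QZ0 p q 1 ^ m * QH p q n <= QH p q (S n).
Proof.
  intros Hp0. unfold QH.
  destruct (a_props n) as [[H0 H1] H2].
  assert (H3 := a_ge1 n). assert (H4 := a1_pos Hp0).
  set (x := QZ0 p q n) in *. set (y := QZ0 p q (S n)) in *.
  change (QZ0 p q (S (S n))) with (gen_fun (qlaw p q) y).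
  replace y with (gen_fun (qlaw p q) x) at 2 by reflexivity.
  assert (A := g_diff x y (S m) ltac:(lra) ltac:(lra)).
  assert (B : QZ0 p q 1 ^ m <= y ^ m) by (apply pow_incr; lra).
  assert (C : x ^ m <= y ^ m) by (apply pow_incr; lra).
  assert (D : (y - x) * y ^ m <= y ^ S m - x ^ S m).
  { simpl pow. nra. }
  assert (E := qlaw_nonneg (S m)).
  assert (F : 0 <= y - x) by lra.
  assert (G : qlaw p q (S m) * (QZ0 p q 1 ^ m * (y - x)) <= qlaw p q (S m) * (y ^ S m - x ^ S m)).
  { apply Rmult_le_compat_l. exact E. nra. }
  assert (Hgx : gen_fun (qlaw p q) x = y) by reflexivity. rewrite Hgx in A.
  change (QZ0 p q (S n)) with y. rewrite Rmult_assoc. eapply Rle_trans. exact G. exact A.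
Qed.
End S.

Theorem lemma1 (p : nat -> R) (q : R)
  (Hp_nonneg : forall k, 0 <= p k)
  (Hp_sum : is_series p 1)
  (Hp0 : 0 < p 0%nat)
  (Hmean_fin : ex_series (fun k => INR k * p k))
  (Hmean_gt1 : 1 < Series (fun k => INR k * p k))
  (Hq : 0 < q < 1)
  (Hfix : gen_fun p q = q) :
  exists C : R,
    (forall n k : nat, psi_law p q n k <= C * INR k * q ^ k) /\
    (exists M : R, forall i : nat, (1 <= i)%nat ->
       ex_series (fun k => INR k * psi_law p q (i - 1) k) /\
       Series (fun k => INR k * psi_law p q (i - 1) k) <= M).
Proof.
  assert (Hser : Series p = 1) by (apply is_series_unique; exact Hp_sum).
  assert (Hexp : ex_series p) by (exists 1; exact Hp_sum).
  assert (Hp1 : forall k, p k <= 1).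
  { intros k. rewrite <- Hser. apply term_le_series; assumption. }
  destruct (classic (exists m, 0 < p (S m))) as [[m Hm]|Hn].
  2: { exfalso.
       assert (Hz : forall m, p (S m) = 0).
       { intros m. destruct (Rle_lt_dec (p (S m)) 0) as [H|H].
         - specialize (Hp_nonneg (S m)). lra.
         - exfalso. apply Hn. exists m. exact H. }
       assert (Series (fun k => INR k * p k) <= Series p).
       { apply Series_le; [|exact Hexp]. intros [|k].
         - simpl. specialize (Hp_nonneg 0%nat). lra.
         - rewrite Hz. lra. }
       lra. }
  set (a1 := QZ0 p q 1).
  assert (Ha1 : 0 < a1) by (apply a1_pos; assumption).
  set (kap := qlaw p q (S m) * a1 ^ m).
  assert (Hkap : 0 < kap).
  { unfold kap. apply Rmult_lt_0_compat. 2: apply pow_lt; lra.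
    unfold qlaw. apply Rmult_lt_0_compat. apply Rmult_lt_0_compat. lra. apply pow_lt; lra.
    apply Rinv_0_lt_compat; lra. }
  assert (Hc : forall n, 0 <= cst p q n <= / kap).
  { intros n. unfold cst.
    assert (HS := QH_step p q Hp_nonneg Hp_sum Hq Hfix m n Hp0). fold a1 kap in HS.
    assert (H0 : 0 <= QH p q n).
    { unfold QH. destruct (a_props p q Hp_nonneg Hp_sum Hq Hfix n). lra. }
    destruct (Req_dec (QH p q n) 0) as [E|E].
    - rewrite E. unfold Rdiv. rewrite Rmult_0_l. split. lra. apply Rlt_le, Rinv_0_lt_compat; lra.
    - assert (Hpos : 0 < QH p q n) by lra.
      assert (Hpos2 : 0 < QH p q (S n)) by nra.
      split. apply Rlt_le, Rdiv_lt_0_compat; lra.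
      apply Rmult_le_reg_r with (QH p q (S n)). exact Hpos2.
      unfold Rdiv. rewrite Rmult_assoc, Rinv_l by lra. rewrite Rmult_1_r.
      apply Rmult_le_reg_l with kap. exact Hkap.
      rewrite <- Rmult_assoc, Rinv_r by lra. lra. }
  assert (Hpow01 : forall n i, 0 <= QZ0 p q n ^ i <= 1).
  { intros n i. destruct (a_props p q Hp_nonneg Hp_sum Hq Hfix n) as [[A B] D].
    split. apply pow_le; lra. rewrite <- (pow1 i). apply pow_incr; lra. }
  assert (Hphi : forall n j k, 0 <= phipsi_law p q n j k <= cst p q n * qlaw p q k).
  { intros n j k. unfold phipsi_law.
    assert (Q := qlaw_nonneg p q Hp_nonneg Hq k). destruct (Hc n).
    assert (0 <= cst p q n * qlaw p q k) by (apply Rmult_le_pos; lra).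
    destruct (andb _ _).
    - destruct (Hpow01 n (j - 1)%nat), (Hpow01 (S n) (k - j)%nat).
      set (u := QZ0 p q n ^ (j - 1)) in *. set (v := QZ0 p q (S n) ^ (k - j)) in *.
      set (w := cst p q n * qlaw p q k) in *.
      split. apply Rmult_le_pos. apply Rmult_le_pos; lra. lra.
      assert (0 <= w * u <= w) by (split; nra). nra.
    - lra. }
  assert (Hpsi : forall n k, 0 <= psi_law p q n k <= INR k * (cst p q n * qlaw p q k)).
  { intros n k. unfold psi_law.
    assert (Hgen : forall N, 0 <= sum_f_R0 (fun j => phipsi_law p q n j k) N
                              <= INR N * (cst p q n * qlaw p q k)).
    { induction N as [|N IH].
      - simpl. unfold phipsi_law. simpl. lra.
      - simpl sum_f_R0. rewrite S_INR. destruct (Hphi n (S N) k). lra. }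
    apply Hgen. }
  set (C := / kap * / q).
  assert (HC : 0 < C) by (unfold C; apply Rmult_lt_0_compat; apply Rinv_0_lt_compat; lra).
  assert (Hb : forall n k, 0 <= psi_law p q n k <= C * INR k * q ^ k).
  { intros n k. destruct (Hpsi n k) as [A B]. split. exact A.
    eapply Rle_trans. exact B.
    destruct (Hc n).
    assert (Q0 := qlaw_nonneg p q Hp_nonneg Hq k).
    assert (Q1 : qlaw p q k <= q ^ k * / q).
    { unfold qlaw, Rdiv. apply Rmult_le_compat_r. apply Rlt_le, Rinv_0_lt_compat; lra.
      specialize (Hp1 k). assert (0 <= q ^ k) by (apply pow_le; lra). nra. }
    assert (HI := pos_INR k).
    assert (cst p q n * qlaw p q k <= / kap * (q ^ k * / q)).
    { apply Rmult_le_compat; lra. }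
    unfold C. replace (/ kap * / q * INR k * q ^ k) with (INR k * (/ kap * (q ^ k * / q))) by ring.
    apply Rmult_le_compat_l; lra. }
  exists C. split.
  { intros n k. apply Hb. }
  exists (C * Series (fun k => INR k * INR k * q ^ k)).
  intros i _.
  assert (Hle : forall k, 0 <= INR k * psi_law p q (i - 1) k <= C * (INR k * INR k * q ^ k)).
  { intros k. destruct (Hb (i - 1)%nat k). assert (HI := pos_INR k). split. nra.
    replace (C * (INR k * INR k * q ^ k)) with (INR k * (C * INR k * q ^ k)) by ring.
    apply Rmult_le_compat_l; lra. }
  assert (Hex2 : ex_series (fun k => C * (INR k * INR k * q ^ k))).
  { apply (@ex_series_scal_l R_AbsRing R_NormedModule). apply ex_k2. exact Hq. }
  split.
  - apply (@ex_series_le R_AbsRing R_CompleteNormedModule (fun k => INR k * psi_law p q (i - 1) k) (fun k => C * (INR k * INR k * q ^ k))); [|exact Hex2].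
    intros k. change (norm (INR k * psi_law p q (i - 1) k)) with (Rabs (INR k * psi_law p q (i - 1) k)).
    rewrite Rabs_pos_eq; apply Hle.
  - rewrite <- Series_scal_l. apply Series_le; [exact Hle | exact Hex2].
Qed.
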